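(* Suppose $c_0/n\leq p\leq\ln(n)^7/n$ for a sufficiently large constant $c_0>0$. Then with probability $1-o(1)$ as $n\to\infty$ the random graph $G=G(n,p)$ on vertex set $V$ has no set $U\subset V$ with $|U|\leq1/p$ and $\chi(G[U])>\sqrt{np}$.
   Context: $G(n,p)$ is the random graph on $V=\{1,\dots,n\}$ with each possible edge present independently with probability $p$; $G[U]$ is the induced subgraph on $U$ and $\chi$ is the chromatic number. *)

(* Defs.v *)
From HB Require Import structures.
From mathcomp Require Import all_boot all_order all_algebra.
From mathcomp Require Import all_classical all_reals all_analysis.
Set Implicit Arguments. Unset Strict Implicit. Unset Printing Implicit Defensive.
Import Order.TTheory GRing.Theory Num.Theory.
Import numFieldNormedType.Exports.
Local Open Scope ring_scope.

(* Vertex set V = 'I_n (i.e. {0,...,n-1}, a relabelling of {1,...,n}).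
   A graph is encoded by its edge set E, a set of ordered pairs (i,j) with i<j
   (each unordered pair {i,j} is stored once, as (min,max)). *)
Definition vpairs (n : nat) : {set 'I_n * 'I_n} := [set e : 'I_n * 'I_n | (e.1 < e.2)%N].

Definition adj (n : nat) (E : {set 'I_n * 'I_n}) (u v : 'I_n) : bool :=
  (u != v) && (((u, v) \in E) || ((v, u) \in E)).

Definition colorable (n : nat) (E : {set 'I_n * 'I_n}) (U : {set 'I_n}) (k : nat) : bool :=
  [exists f : {ffun 'I_n -> 'I_k},
     [forall u in U, forall v in U, adj E u v ==> (f u != f v)]].

(* chromatic number of G[U]: least k <= n such that G[U] is k-colourable
   (n colours always suffice, so this is the true chromatic number). *)
Definition chi (n : nat) (E : {set 'I_n * 'I_n}) (U : {set 'I_n}) : nat :=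
  \big[minn/n]_(k < n.+1 | colorable E U k) k.

Definition gnp_prob (R : realType) (n : nat) (p : R) (E : {set 'I_n * 'I_n}) : R :=
  if E \subset vpairs n
  then p ^+ #|E| * (1 - p) ^+ (#|vpairs n| - #|E|)
  else 0.

Definition gnp_event (R : realType) (n : nat) (p : R)
    (A : {set 'I_n * 'I_n} -> bool) : R :=
  \sum_(E : {set 'I_n * 'I_n} | A E) gnp_prob p E.

(* Main.v *)
Require Import Defs.
From HB Require Import structures.
From mathcomp Require Import all_boot all_order all_algebra.
From mathcomp Require Import all_classical all_reals all_analysis.
From mathcomp Require Import ring lra zify.
Import Order.TTheory GRing.Theory Num.Theory.
Import numFieldNormedType.Exports.
Set Implicit Arguments. Unset Strict Implicit. Unset Printing Implicit Defensive.

Section Comb.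
Variable n : nat.
Implicit Types (E : {set 'I_n * 'I_n}) (U W : {set 'I_n}).

Definition nbr E W u := [set v in W | adj E u v].

Lemma adjC E u v : adj E u v = adj E v u.
Proof. by rewrite /adj eq_sym orbC. Qed.

Lemma adj_irr E u : adj E u u = false.
Proof. by rewrite /adj eqxx. Qed.

Lemma dense_sub E k : (0 < k)%N -> forall U, ~~ colorable E U k ->
  exists W, [/\ W \subset U, (0 < #|W|)%N & forall u, u \in W -> (k <= #|nbr E W u|)%N].
Proof.
move=> k0.
suff H : forall m U, (#|U| < m)%N -> ~~ colorable E U k -> exists W,
  [/\ W \subset U, (0 < #|W|)%N & forall u, u \in W -> (k <= #|nbr E W u|)%N].
  by move=> U; apply: (H #|U|.+1).
elim=> [|m IH] U // hU ncol.
case: (boolP [forall u in U, k <= #|nbr E U u|]) => [/forall_inP all|].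
  exists U; split => //; rewrite card_gt0.
  apply: contraNneq ncol => ->.
  apply/existsP; exists [ffun _ => Ordinal k0]; apply/forall_inP => u.
  by rewrite inE.
move/forall_inPn => [v vU]; rewrite -ltnNge => degv.
have hU' : (#|U :\ v| < m)%N by move: hU; rewrite (cardsD1 v U) vU.
case: (boolP (colorable E (U :\ v) k)) => [col'|ncol']; last first.
  have [W [WU' W0 HW]] := IH _ hU' ncol'.
  by exists W; split => //; exact: (fintype.subset_trans WU' (subD1set _ _)).
exfalso.
move/existsP: col' => [f /forall_inP Hf].
have [c cN] : exists c, c \notin f @: nbr E U v.
  apply/existsP; rewrite -negb_forall; apply/negP => /forallP Hall.
  have : (#|'I_k| <= #|f @: nbr E U v|)%N.
    by apply: subset_leq_card; apply/fintype.subsetP => x _; apply: Hall.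
  rewrite card_ord => H.
  by move: (leq_trans H (leq_imset_card _ _)); rewrite leqNgt degv.
move/negP: ncol; apply; apply/existsP.
exists [ffun u => if u == v then c else f u].
apply/forall_inP => u uU; apply/forall_inP => w wU; apply/implyP => auw.
rewrite !ffunE.
case: (eqVneq u v) => [euv|uv]; case: (eqVneq w v) => [ewv|wv].
- by move: auw; rewrite euv ewv adj_irr.
- apply: contraNneq cN => ->; apply: imset_f.
  by rewrite inE wU -euv auw.
- apply: contraNneq cN => <-; apply: imset_f.
  by rewrite inE uU adjC -ewv auw.
- have uU' : u \in U :\ v by rewrite !inE uv uU.
  have wU' : w \in U :\ v by rewrite !inE wv wU.
  by move/forall_inP: (Hf u uU') => /(_ w wU') /implyP; apply.
Qed.


Lemma card_sum (T : finType) (A : {set T}) : #|A| = (\sum_x ((x \in A) : nat))%N.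
Proof.
by rewrite -sum1_card big_mkcond /=; apply: eq_bigr => x _; case: (x \in A).
Qed.

Lemma sum_pair (F : 'I_n * 'I_n -> nat) :
  (\sum_x F x = \sum_u \sum_v F (u, v))%N.
Proof. by rewrite pair_bigA; apply: eq_bigr => -[]. Qed.

Lemma cardF1 E W : #|E :&: finset.setX W W| =
  (\sum_(u in W) #|[set v in W | (u, v) \in E]|)%N.
Proof.
rewrite card_sum sum_pair.
rewrite [RHS]big_mkcond /=; apply: eq_bigr => u _.
case uW: (u \in W).
  by rewrite card_sum; apply: eq_bigr => v _; rewrite !inE uW /= andbC.
by apply: big1 => v _; rewrite !inE uW /= andbF.
Qed.

Lemma cardF2 E W : #|E :&: finset.setX W W| =
  (\sum_(u in W) #|[set v in W | (v, u) \in E]|)%N.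
Proof.
rewrite card_sum sum_pair.
rewrite exchange_big /=.
rewrite [RHS]big_mkcond /=; apply: eq_bigr => u _.
case uW: (u \in W).
  by rewrite card_sum; apply: eq_bigr => v _; rewrite !inE uW /= andbT andbC.
by apply: big1 => v _; rewrite !inE uW /= !andbF.
Qed.

Lemma edges_lb E W h : (forall u, u \in W -> (2 * h <= #|nbr E W u|)%N) ->
  (h * #|W| <= #|E :&: finset.setX W W|)%N.
Proof.
move=> Hdeg.
rewrite -(@leq_pmul2l 2) //.
have -> : (2 * #|E :&: finset.setX W W| = #|E :&: finset.setX W W| + #|E :&: finset.setX W W|)%N.
  by rewrite mul2n addnn.
rewrite {2}cardF1 cardF2 -big_split /= mulnA mulnC -sum_nat_const.
apply: leq_sum => u uW.
apply: (leq_trans (Hdeg u uW)).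
rewrite addnC.
apply: leq_trans (leq_card_setU _ _).1.
apply: subset_leq_card; apply/fintype.subsetP => v.
rewrite !inE => /andP [vW]; rewrite /adj => /andP [_ /orP [] ->]; by rewrite vW ?orbT.
Qed.


Lemma sub_card (T : finType) (B : {set T}) k : (k <= #|B|)%N ->
  exists S : {set T}, S \subset B /\ #|S| = k.
Proof.
move=> kB.
have : (0 < #|[set A : {set T} | A \subset B & #|A| == k]|)%N by rewrite cards_draws bin_gt0.
case/card_gt0P => S; rewrite inE => /andP [SB /eqP Sk].
by exists S.
Qed.

Lemma witness E U h : (0 < h)%N -> ~~ colorable E U (2 * h) ->
  exists (W : {set 'I_n}) (S : {set 'I_n * 'I_n}), [/\ W \subset U, (2 * h < #|W|)%N, S \subset finset.setX W W,
     #|S| = (h * #|W|)%N & S \subset E].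
Proof.
move=> h0 ncol.
have k0 : (0 < 2 * h)%N by rewrite muln_gt0.
have [W [WU W0 HW]] := dense_sub k0 ncol.
have [u uW] : exists u, u \in W by apply/card_gt0P.
have lt : (2 * h < #|W|)%N.
  apply: (leq_trans (n := #|nbr E W u|.+1)); first by rewrite ltnS HW.
  rewrite (cardsD1 u W) uW add1n ltnS.
  apply: subset_leq_card; apply/fintype.subsetP => v.
  rewrite !inE => /andP [vW auv]; rewrite vW andbT.
  by apply: contraTneq auv => ->; rewrite adj_irr.
have [S [SF Sc]] := sub_card (edges_lb (h := h) HW).
exists W, S; split => //.
- by apply: (fintype.subset_trans SF); apply: subsetIr.
- by apply: (fintype.subset_trans SF); apply: subsetIl.
Qed.

End Comb.

Local Open Scope ring_scope.

Section SumCard.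
Variable R : realType.

Lemma sum_card (T : finType) (X : {set T}) (g : nat -> R) :
  \sum_(G : {set T} | G \subset X) g #|G| =
  \sum_(k < #|X|.+1) 'C(#|X|, k)%:R * g k.
Proof.
rewrite (partition_big (fun G : {set T} => (inord #|G| : 'I_(#|X|.+1))) predT) //=.
apply: eq_bigr => k _.
have E1 : forall G : {set T}, G \subset X ->
    ((inord #|G| : 'I_(#|X|.+1)) == k) = (#|G| == k).
  move=> G GX; rewrite -(inj_eq val_inj) /= inordK //.
  by rewrite ltnS subset_leq_card.
rewrite (eq_bigr (fun _ => g k)); last first.
  by move=> G /andP [GX /eqP <-]; rewrite inordK // ltnS subset_leq_card.
rewrite sumr_const.
rewrite (eq_card (B := [set A : {set T} | A \subset X & #|A| == k])); last first.
  move=> G; rewrite [in RHS]inE unfold_in /=; case GX: (G \subset X) => //=; exact: E1.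
by rewrite cards_draws mulr_natl.
Qed.


Variable n : nat.
Variable p : R.
Hypothesis hp0 : 0 <= p.
Hypothesis hp1 : p <= 1.

Lemma gnp_prob_ge0 (E : {set 'I_n * 'I_n}) : 0 <= gnp_prob p E.
Proof.
rewrite /gnp_prob; case: ifP => // _.
by rewrite mulr_ge0 // exprn_ge0 // subr_ge0.
Qed.

Lemma gnp_sub (S : {set 'I_n * 'I_n}) : S \subset vpairs n ->
  gnp_event p (fun E => S \subset E) = p ^+ #|S|.
Proof.
move=> SP.
set P := vpairs n.
set X := P :\: S.
rewrite /gnp_event.
have -> : \sum_(E : {set 'I_n * 'I_n} | S \subset E) gnp_prob p E =
   \sum_(E in [set G :|: S | G in powerset X]) (p ^+ #|E| * (1 - p) ^+ (#|P| - #|E|)).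
  rewrite [LHS]big_mkcond [RHS]big_mkcond /=; apply: eq_bigr => E _.
  rewrite /gnp_prob -/P.
  case: (boolP (S \subset E)) => SE; case: (boolP (E \subset P)) => EP.
  - suff -> : E \in [set G :|: S | G in powerset X] by [].
    apply/imsetP; exists (E :\: S).
      rewrite powersetE; apply/fintype.subsetP => x; rewrite !inE => /andP [xS xE].
      by rewrite xS; move: (fintype.subsetP EP x xE); rewrite inE.
    apply/finset.setP => x; rewrite !inE; case xS: (x \in S); last by rewrite orbF.
    by rewrite (fintype.subsetP SE).
  - case: imsetP => // -[G]; rewrite powersetE => GX EG.
    exfalso; move/negP: EP; apply; rewrite EG; apply/fintype.subsetP => x.
    rewrite inE => /orP [xG|xS]; last by apply: (fintype.subsetP SP).
    by move: (fintype.subsetP GX x xG); rewrite inE => /andP [].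
  - case: imsetP => // -[G]; rewrite powersetE => GX EG.
    by move/negP: SE; case; rewrite EG finset.subsetUr.
  - case: imsetP => // -[G]; rewrite powersetE => GX EG.
    by move/negP: SE; case; rewrite EG finset.subsetUr.
have inj : {in powerset X &, injective (fun G => G :|: S)}.
  move=> G1 G2; rewrite !powersetE => G1X G2X EG.
  apply/finset.setP => x.
  case xS: (x \in S).
    move: (fintype.subsetP G1X x) (fintype.subsetP G2X x); rewrite !inE xS /=.
    by case: (x \in G1) => [/(_ isT)|_]; case: (x \in G2) => // /(_ isT).
  by move/finset.setP: EG => /(_ x); rewrite !inE xS !orbF.
rewrite (big_imset _ inj) /=.
have cX : #|X| = (#|P| - #|S|)%N by rewrite cardsD (finset.setIidPr SP).
have cU : forall G : {set 'I_n * 'I_n}, G \subset X -> #|G :|: S| = (#|G| + #|S|)%N.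
  move=> G GX; rewrite cardsU.
  suff -> : #|G :&: S| = 0%N by rewrite subn0.
  apply/eqP; rewrite cards_eq0; apply/eqP/finset.setP => x; rewrite !inE.
  case xG: (x \in G) => //=.
  by move: (fintype.subsetP GX x xG); rewrite inE => /andP [/negbTE].
rewrite (eq_bigr (fun G : {set 'I_n * 'I_n} => p ^+ #|S| * (p ^+ #|G| * (1 - p) ^+ (#|X| - #|G|)))); last first.
  move=> G; rewrite powersetE => GX; rewrite cU // exprD cX subnDA.
  by rewrite subnAC [p ^+ #|G| * _]mulrC mulrA.
rewrite -big_distrr /=.
have -> : \sum_(G in powerset X) (p ^+ #|G| * (1 - p) ^+ (#|X| - #|G|)) =
   \sum_(G : {set _} | G \subset X) (p ^+ #|G| * (1 - p) ^+ (#|X| - #|G|)).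
  by apply: eq_bigl => G; rewrite powersetE.
rewrite (sum_card X (fun k => p ^+ k * (1 - p) ^+ (#|X| - k))).
suff -> : \sum_(k < #|X|.+1) 'C(#|X|, k)%:R * (p ^+ k * (1 - p) ^+ (#|X| - k)) = 1.
  by rewrite mulr1.
apply: (@eq_trans _ _ ((1 - p + p) ^+ #|X|)); last by rewrite subrK expr1n.
rewrite exprDn; apply: eq_bigr => k _; rewrite mulr_natl; congr (_ *+ _); exact: mulrC.
Qed.

Lemma gnp_sub_le (S : {set 'I_n * 'I_n}) :
  gnp_event p (fun E => S \subset E) <= p ^+ #|S|.
Proof.
case: (boolP (S \subset vpairs n)) => SP; first by rewrite gnp_sub.
rewrite /gnp_event big1 ?exprn_ge0 // => E SE.
rewrite /gnp_prob; case: ifP => // EP.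
by move/negP: SP; case; apply: fintype.subset_trans SE EP.
Qed.


Lemma union_bound (A : {set 'I_n * 'I_n} -> bool) (cW : pred {set 'I_n})
  (cS : {set 'I_n} -> pred {set 'I_n * 'I_n}) :
  (forall E, A E -> exists W S, [&& cW W, cS W S & S \subset E]) ->
  gnp_event p A <= \sum_(W | cW W) \sum_(S | cS W S) gnp_event p (fun E => S \subset E).
Proof.
move=> HA.
have -> : \sum_(W | cW W) \sum_(S | cS W S) gnp_event p (fun E => S \subset E) =
  \sum_(E : {set 'I_n * 'I_n}) \sum_(W | cW W) \sum_(S | cS W S) (if S \subset E then gnp_prob p E else 0).
  rewrite exchange_big /=; apply: eq_bigr => W _.
  rewrite exchange_big /=; apply: eq_bigr => S _.
  by rewrite /gnp_event big_mkcond.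
rewrite /gnp_event big_mkcond /=; apply: ler_sum => E _.
case: ifP => AE; last first.
  by apply: sumr_ge0 => W _; apply: sumr_ge0 => S _; case: ifP => // _; apply: gnp_prob_ge0.
have [W [S /and3P [cw cs SE]]] := HA E AE.
rewrite (bigD1 W) //= (bigD1 S) //= SE -addrA lerDl addr_ge0 //.
  by apply: sumr_ge0 => S' _; case: ifP => // _; apply: gnp_prob_ge0.
by apply: sumr_ge0 => W' _; apply: sumr_ge0 => S' _; case: ifP => // _; apply: gnp_prob_ge0.
Qed.

End SumCard.

Section NumS.
Variable R : realType.

Lemma expR1_le4 : expR (1:R) <= 4.
Proof.
have h1 : 2^-1 <= expR (- 2^-1 : R).
  apply: le_trans (expR_ge1Dx _); lra.
have h2 : expR (2^-1 : R) <= 2.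
  have -> : expR (2^-1 : R) = (expR (- 2^-1))^-1 by rewrite -expRN opprK.
  by rewrite invf_ple ?posrE ?expR_gt0.
have -> : expR (1 : R) = expR (2^-1) ^+ 2 by rewrite -expRM_natl mulfV.
have -> : (4 : R) = 2 ^+ 2 by rewrite expr2; lra.
by apply: lerXn2r => //; rewrite nnegrE ?expR_ge0.
Qed.

Lemma kk_le (k : nat) : (k ^ k <= 4 ^ k * k`!)%N.
Proof.
case: k => [//|m].
have H : (m.+1%:R ^+ m.+1 / (m.+1)`!%:R : R) <= 4 ^+ m.+1.
  apply: (le_trans (y := expR m.+1%:R)).
    apply: le_trans (expR_ge1Dxn m (ler0n _ _)).
    by rewrite lerDr.
  rewrite -[m.+1%:R]mulr1 expRM_natl.
  by apply: lerXn2r; rewrite ?nnegrE ?expR_ge0 // expR1_le4.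
rewrite ler_pdivrMr ?ltr0n ?fact_gt0 // in H.
by rewrite -(ler_nat R) natrM !natrX.
Qed.

Lemma ffact_le_exp (m k : nat) : (m ^_ k <= m ^ k)%N.
Proof.
elim: k m => [//|k IH] m.
rewrite ffactnS expnS leq_mul //.
apply: leq_trans (IH _) _.
by case: k {IH} => // k; rewrite leq_exp2r // leq_pred.
Qed.

Lemma binom_pow (m k : nat) : ('C(m, k) * k ^ k <= (4 * m) ^ k)%N.
Proof.
apply: (leq_trans (n := 'C(m, k) * (4 ^ k * k`!))); first by rewrite leq_mul2l kk_le orbT.
rewrite mulnCA bin_ffact expnMn leq_mul2l ffact_le_exp orbT //.
Qed.

Lemma pow_grow (h : nat) : (6 <= h)%N -> (8 * (2 * h + 2) ^ 2 <= 4 ^ h)%N.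
Proof.
move=> h6; rewrite -(subnKC h6).
elim: (h - 6)%N => [//|d IH].
rewrite addnS expnS.
apply: leq_trans _ (leq_mul (leqnn 4) IH).
rewrite !expnS !expn0 !muln1; nia.
Qed.


Lemma core_ineq (n w h : nat) (p : R) : 0 < p -> (16 <= h)%N -> (0 < w)%N ->
  w%:R * p <= 1 -> n%:R * p <= ((2 * h + 2) ^ 2)%:R ->
  2 * (4 * n%:R * (4 * (w * w)%:R * p) ^+ h) <=
  (w%:R * p) * (w%:R * ((h * w)%:R) ^+ h).
Proof.
move=> p0 h16 w0 x1 aB.
set x := w%:R * p.
have x0 : 0 < x by rewrite mulr_gt0 // ltr0n.
have xdef : x = w%:R * p by [].
clearbody x. rewrite -xdef in x1.
have e1 : 4 * (w * w)%:R * p = (4 * w%:R) * x by rewrite natrM xdef; ring.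
rewrite e1 natrM !exprMn.
rewrite -(ler_pM2l p0).
have -> : p * (2 * (4 * n%:R * (4 ^+ h * w%:R ^+ h * x ^+ h))) =
   (8 * (n%:R * p) * 4 ^+ h * x ^+ h) * w%:R ^+ h by ring.
have -> : p * (x * (w%:R * (h%:R ^+ h * w%:R ^+ h))) =
   (h%:R ^+ h * x ^+ 2) * w%:R ^+ h by rewrite xdef; ring.
rewrite ler_pM2r ?exprn_gt0 ?ltr0n //.
have xh : x ^+ h <= x ^+ 2 by apply: ler_wiXn2l => //; [exact: ltW | rewrite (leq_trans _ h16)].
have g1 : 8 * (n%:R * p) <= (4:R) ^+ h.
  apply: (le_trans (y := 8 * ((2 * h + 2) ^ 2)%:R)); first by rewrite ler_pM2l.
  have hh : (6 <= h)%N by rewrite (leq_trans _ h16).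
  by have := pow_grow hh; rewrite -(ler_nat R) natrM !natrX.
have g2 : (4:R) ^+ h * 4 ^+ h <= h%:R ^+ h.
  rewrite -exprMn.
  have : (16 ^ h <= h ^ h)%N by rewrite leq_exp2r // (leq_trans _ h16).
  by rewrite -(ler_nat R) !natrX; apply: le_trans; rewrite (_ : 16%:R = 4 * 4) //; lra.
have a0 : 0 <= n%:R * p by rewrite mulr_ge0 // ltW.
apply: (le_trans (y := 8 * (n%:R * p) * 4 ^+ h * x ^+ 2)).
  by apply: ler_wpM2l => //; rewrite mulr_ge0 ?exprn_ge0 // mulr_ge0.
rewrite ler_pM2r ?exprn_gt0 //.
by apply: le_trans g2; rewrite ler_pM2r ?exprn_gt0.
Qed.


Lemma term_bound (n w h : nat) (p : R) : 0 < p -> (16 <= h)%N -> (0 < w)%N ->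
  w%:R * p <= 1 -> n%:R * p <= ((2 * h + 2) ^ 2)%:R ->
  'C(n, w)%:R * ('C(w * w, h * w)%:R * p ^+ (h * w)) <= p * w%:R * (2^-1) ^+ w.
Proof.
move=> p0 h16 w0 x1 aB.
have core := core_ineq p0 h16 w0 x1 aB.
have h0 : (0 < h)%N by rewrite (leq_trans _ h16).
have Qpos : 0 < w%:R ^+ w * (h * w)%:R ^+ (h * w) :> R.
  by rewrite mulr_gt0 // exprn_gt0 // ltr0n // muln_gt0 h0.
rewrite -(ler_pM2r Qpos).
have b1 : 'C(n, w)%:R * w%:R ^+ w <= (4 * n%:R) ^+ w :> R.
  by have := binom_pow n w; rewrite -(ler_nat R) ?natrM ?natrX ?natrM.
have b2 : 'C(w * w, h * w)%:R * (h * w)%:R ^+ (h * w) <= (4 * (w * w)%:R) ^+ (h * w) :> R.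
  by have := binom_pow (w * w) (h * w); rewrite -(ler_nat R) ?natrM ?natrX ?natrM.
have -> : 'C(n, w)%:R * ('C(w * w, h * w)%:R * p ^+ (h * w)) *
    (w%:R ^+ w * (h * w)%:R ^+ (h * w)) =
    ('C(n, w)%:R * w%:R ^+ w) * ('C(w * w, h * w)%:R * (h * w)%:R ^+ (h * w)) * p ^+ (h * w) by ring.
apply: (le_trans (y := (4 * n%:R) ^+ w * (4 * (w * w)%:R) ^+ (h * w) * p ^+ (h * w))).
  apply: ler_wpM2r; first by rewrite exprn_ge0 // ltW.
  apply: ler_pM => //; by rewrite mulr_ge0.
have -> : (4 * n%:R) ^+ w * (4 * (w * w)%:R) ^+ (h * w) * p ^+ (h * w) =
   (4 * n%:R * (4 * (w * w)%:R * p) ^+ h) ^+ w.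
  by rewrite !exprM -!exprMn -mulrA -exprMn.
set x := w%:R * p in core x1 *.
have x0 : 0 < x by rewrite mulr_gt0 // ltr0n.
apply: (le_trans (y := (x * (w%:R * (h * w)%:R ^+ h) / 2) ^+ w)).
  apply: lerXn2r; rewrite ?nnegrE.
  - by rewrite ?(mulr_ge0, exprn_ge0, invr_ge0, ler0n) // ltW.
  - by rewrite ?(mulr_ge0, exprn_ge0, invr_ge0, ler0n) // ltW.
  - by rewrite ler_pdivlMr //; rewrite mulrC.
have -> : (x * (w%:R * (h * w)%:R ^+ h) / 2) ^+ w =
  x ^+ w * ((2^-1) ^+ w * (w%:R ^+ w * (h * w)%:R ^+ (h * w))).
  by rewrite exprM !exprMn; ring.
rewrite -!mulrA [p * _]mulrA [p * _]mulrC -/x ler_wpM2r //.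
by rewrite -{2}(expr1 x); apply: ler_wiXn2l => //; exact: ltW.
Qed.

End NumS.

Section Main.
Variable R : realType.

Lemma sum_wgeom (N : nat) :
  \sum_(w < N) w%:R * (2^-1 : R) ^+ w + (N.+1)%:R * (2^-1) ^+ N * 2 = 2.
Proof.
elim: N => [|N IH]; first by rewrite big_ord0 add0r expr0 mulr1 mul1r.
rewrite big_ord_recr /=.
rewrite -[X in _ = X]IH exprS.
have -> : N.+2%:R = N%:R + 2 :> R by rewrite -addn2 natrD.
have -> : N.+1%:R = N%:R + 1 :> R by rewrite -addn1 natrD.
by field.
Qed.

Lemma sum_wgeom_le (N : nat) : \sum_(w < N) w%:R * (2^-1 : R) ^+ w <= 2.
Proof.
rewrite -[X in _ <= X](sum_wgeom N) lerDl.
by rewrite !mulr_ge0 // exprn_ge0 // invr_ge0.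
Qed.

Lemma bigmin_le (I : eqType) (r : seq I) (P : pred I) (F : I -> nat) x0 j :
  j \in r -> P j -> (\big[minn/x0]_(i <- r | P i) F i <= F j)%N.
Proof.
elim: r => // a r IH; rewrite inE big_cons => /orP [/eqP -> Pj | jr Pj].
  by rewrite Pj geq_minl.
case: ifP => _; last exact: IH.
by rewrite geq_min IH ?orbT.
Qed.

Lemma chi_le_n n (E : {set 'I_n * 'I_n}) U : (chi E U <= n)%N.
Proof.
rewrite /chi; apply: (big_ind (fun x => x <= n)%N) => //.
  by move=> x y hx _; rewrite geq_min hx.
by move=> i _; rewrite -ltnS.
Qed.

Lemma chi_le n (E : {set 'I_n * 'I_n}) U k : (k <= n)%N -> colorable E U k -> (chi E U <= k)%N.
Proof.
move=> kn col; rewrite /chi.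
have kn' : (k < n.+1)%N by [].
have := bigmin_le (fun k : 'I_n.+1 => (k : nat)) n (mem_index_enum (Ordinal kn')) (P := fun k : 'I_n.+1 => colorable E U k).
by apply.
Qed.


Definition Aev n (q : R) (E : {set 'I_n * 'I_n}) : bool :=
  [exists U : {set 'I_n},
     (#|U|%:R <= q^-1) && (Num.sqrt (n%:R * q) < (chi E U)%:R)].

Lemma main_bound n (q : R) : 0 < q -> q <= 1 -> 4096 <= n%:R * q ->
  gnp_event q (@Aev n q) <= 2 * q.
Proof.
move=> q0 q1 aL.
have hq0 := ltW q0.
set a := n%:R * q in aL *.
have a0 : 0 <= a by apply: (le_trans _ aL); rewrite ler0n.
set s := Num.sqrt a.
have s0 : 0 <= s by apply: sqrtr_ge0.
have s2 : s ^+ 2 = a by apply: sqr_sqrtr.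
have s64 : 64 <= s by nra.
set h := Num.truncn (s / 2).
have s20 : 0 <= s / 2 by rewrite divr_ge0.
have /andP [hlo hhi] := truncn_itv s20.
rewrite -/h in hlo hhi.
have h16 : (16 <= h)%N.
  by rewrite /h truncn_ge_nat //; lra.
have h0 : (0 < h)%N by rewrite (leq_trans _ h16).
have hs : (2 * h)%:R <= s by rewrite natrM; lra.
have aB : a <= ((2 * h + 2) ^ 2)%:R.
  rewrite natrX natrD natrM -s2; apply: ltW.
  rewrite ltrXn2r //; rewrite -[h.+1]addn1 natrD in hhi; lra.
pose cW := fun W : {set 'I_n} => (2 * h < #|W|)%N && (#|W|%:R <= q^-1).
pose cS := fun (W : {set 'I_n}) (S : {set 'I_n * 'I_n}) =>
  (S \subset finset.setX W W) && (#|S| == h * #|W|)%N.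
have HA : forall E, Aev q E -> exists W S, [&& cW W, cS W S & S \subset E].
  move=> E /existsP [U /andP [Uc Uchi]].
  have ncol : ~~ colorable E U (2 * h).
    apply/negP => col.
    have : (chi E U <= 2 * h)%N.
      case: (leqP (2 * h) n) => h2n; first exact: chi_le.
      exact: leq_trans (chi_le_n _ _) (ltnW h2n).
    rewrite -(ler_nat R) => cle.
    have := lt_le_trans Uchi (le_trans cle hs).
    by rewrite ltxx.
  have [W [S [WU hW SX Sc SE]]] := witness h0 ncol.
  exists W, S; rewrite /cW /cS hW SX Sc eqxx SE /= andbT.
  by apply: le_trans Uc; rewrite ler_nat subset_leq_card.
apply: le_trans (union_bound hq0 q1 HA) _.
apply: (le_trans (y := \sum_(W | cW W) ('C(#|W| * #|W|, h * #|W|)%:R * q ^+ (h * #|W|)))).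
  apply: ler_sum => W _.
  apply: (le_trans (y := \sum_(S | cS W S) q ^+ (h * #|W|))).
    apply: ler_sum => S /andP [_ /eqP Sc]; rewrite -Sc; exact: gnp_sub_le.
  rewrite sumr_const.
  have -> : #|[pred S | cS W S]| = 'C(#|W| * #|W|, h * #|W|).
    rewrite -cardsX -cards_draws; apply: eq_card => S; by rewrite !inE.
  by rewrite mulr_natl.
pose g := fun w : nat => if (2 * h < w)%N && (w%:R <= q^-1)
  then 'C(w * w, h * w)%:R * q ^+ (h * w) else 0.
have -> : \sum_(W | cW W) ('C(#|W| * #|W|, h * #|W|)%:R * q ^+ (h * #|W|)) =
   \sum_(W : {set 'I_n} | W \subset [set: 'I_n]) g #|W|.
  rewrite big_mkcond /= [RHS]big_mkcond /=; apply: eq_bigr => W _.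
  by rewrite finset.subsetT /g /cW; case: ifP.
rewrite sum_card.
apply: (le_trans (y := \sum_(k < #|[set: 'I_n]|.+1) q * (k%:R * 2^-1 ^+ k))).
  apply: ler_sum => k _; move: (nat_of_ord k) => {}k; rewrite /g cardsT card_ord.
  case: ifP => [/andP [hk kq]|_]; last by rewrite mulr0 !mulr_ge0 // ?exprn_ge0 // invr_ge0.
  rewrite [in X in _ <= X]mulrA; apply: term_bound => //.
  - by rewrite (leq_trans _ hk).
  - by rewrite -(ler_pM2r q0) mulVf ?gt_eqF // in kq.
rewrite -big_distrr /= mulrC ler_pM2r //; exact: sum_wgeom_le.
Qed.

End Main.

Unset Implicit Arguments. Set Strict Implicit. Set Printing Implicit Defensive.
Local Open Scope classical_set_scope.
Local Open Scope ring_scope.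

Lemma fin_step (R : realType) (K : R) (eps : R) (n : nat) (q : R) :
  1 <= K -> (forall x : R, 0 <= x -> x ^+ 8 / K <= expR x) ->
  0 < eps ->
  expR ((2 * K) / eps + K) <= n%:R ->
  4096 / n%:R <= q -> q <= ln (n%:R) ^+ 7 / n%:R ->
  `|0 - gnp_event q (@Aev R n q)| <= eps.
Proof.
move=> K1 HK eps0 nM lo hi.
set M := 2 * K / eps + K in nM.
have M0 : K <= M by rewrite /M lerDr; apply: divr_ge0; lra.
have n0 : 0 < n%:R :> R by apply: (lt_le_trans _ nM); exact: expR_gt0.
set L := ln (n%:R : R) in hi.
have LM : M <= L by rewrite -(expRK M) /L ler_ln // ?posrE ?expR_gt0.
have L0 : 0 < L by lra.
have nL : n%:R = expR L by rewrite /L lnK // posrE.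
have hK : L ^+ 7 / n%:R <= K / L.
  rewrite ler_pdivrMr // mulrC mulrA ler_pdivlMr // -exprSr.
  have : L ^+ 8 / K <= n%:R by rewrite nL; apply: HK; exact: ltW.
  by rewrite ler_pdivrMr ?(lt_le_trans ltr01) // mulrC.
have c0 : (0:R) < 4096 by rewrite ltr0n.
have q0 : 0 < q := lt_le_trans (divr_gt0 c0 n0) lo.
have qK : q <= K / L := le_trans hi hK.
have KL1 : K / L <= 1 by rewrite ler_pdivrMr // mul1r; lra.
have aL : 4096 <= n%:R * q by rewrite mulrC -ler_pdivrMr.
have P0 : 0 <= gnp_event q (@Aev R n q).
  by apply: sumr_ge0 => E _; apply: gnp_prob_ge0 => //; [exact: ltW | exact: le_trans qK KL1].
rewrite sub0r normrN ger0_norm //.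
apply: le_trans (main_bound q0 (le_trans qK KL1) aL) _.
apply: (le_trans (y := 2 * (K / L))); first by rewrite ler_pM2l.
rewrite mulrA ler_pdivrMr //.
apply: (le_trans (y := eps * M)); last by rewrite ler_pM2l.
have e : eps * (2 * K / eps) = 2 * K by field; rewrite gt_eqF.
rewrite /M mulrDr e.
have := mulr_ge0 (ltW eps0) (le_trans ler01 K1); lra.
Qed.

Lemma expR_fact_bound (R : realType) (x : R) : 0 <= x -> x ^+ 8 / (8`!)%:R <= expR x.
Proof.
move=> x0; apply: le_trans (expR_ge1Dxn 7 x0).
by rewrite lerDr.
Qed.

Theorem lemma12 (R : realType) :
  exists c0 : R, 0 < c0 /\
  forall p : nat -> R,
    (\forall n \near \oo, c0 / n%:R <= p n <= ln (n%:R) ^+ 7 / n%:R) ->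
    (fun n : nat =>
       gnp_event (p n) (fun E : {set 'I_n * 'I_n} =>
         [exists U : {set 'I_n},
            (#|U|%:R <= (p n)^-1) && (Num.sqrt (n%:R * p n) < (chi E U)%:R)]))
      @ \oo --> (0 : R).
Proof.
exists 4096; split; first by rewrite ltr0n.
move=> p Hp.
apply/cvgrPdist_le => eps eps0.
have K1 : 1 <= (8`!)%:R :> R by rewrite ler1n fact_gt0.
near=> n.
have /andP [lo hi] : 4096 / n%:R <= p n <= ln n%:R ^+ 7 / n%:R by near: n.
have nM : expR ((2 * (8`!)%:R) / eps + (8`!)%:R) <= n%:R :> R.
  by near: n; exact: nbhs_infty_ger.
exact: (@fin_step R _ eps n (p n) K1 (@expR_fact_bound R) eps0 nM lo hi).
Unshelve. all: end_near.
Qed.
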